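(* Let $\Pi'\subseteq\Pi$ be nonempty and let $t\ge1$. Then there exists a distribution $P$ over $\Pi'$ such that for all $\pi\in\Pi'$, \[\mathbb{E}_{x\sim D_X}\Bigl[\frac{1}{(1-K\mu_t)W_{P}(x,\pi(x))+\mu_t}\Bigr]\le 2K.\]
   Context: $A$ is a set of $K$ actions, $X$ a set of contexts, $\Pi$ a finite set of $N$ policies $\pi:X\to A$, $D_X$ a distribution on $X$, $\delta\in(0,1)$. $\delta_t=\delta/(4Nt^2)$ and $\mu_t=\min\{\frac1{2K},\sqrt{\ln(1/\delta_t)/(2Kt)}\}$. For a distribution $P$ over $\Pi'$, $W_P(x,a)=\sum_{\pi\in\Pi':\pi(x)=a}P(\pi)$. (This is the feasibility of the distribution-selection step of the PolicyElimination algorithm, where $\Pi'$ is the current nonempty set $\Pi_{t-1}$ of surviving policies.) *)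

(* Defs.v *)
From HB Require Import structures.
From mathcomp Require Import all_boot all_order all_algebra.
From mathcomp Require Import all_classical all_reals all_analysis.
Set Implicit Arguments. Unset Strict Implicit. Unset Printing Implicit Defensive.
Import Order.TTheory GRing.Theory Num.Theory.
Local Open Scope ring_scope.

Definition delta_t (R : realType) (delta : R) (N t : nat) : R :=
  delta / (4 * N%:R * (t%:R ^+ 2)).

Definition mu_t (R : realType) (K N t : nat) (delta : R) : R :=
  Num.min (1 / (2 * K%:R))
          (Num.sqrt (ln (1 / delta_t delta N t) / (2 * K%:R * t%:R))).

(* Policies are indexed by a finite type I, pol : I -> X -> A.
   A distribution over Pi' (a subset of I) is a nonnegative weight
   function supported on Pi' summing to 1 on Pi'. *)
Definition is_distr_on (I : finType) (R : realType) (Pi' : {set I}) (P : I -> R) : Prop :=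
  (forall i, 0 <= P i) /\ (forall i, i \notin Pi' -> P i = 0) /\
  \sum_(i in Pi') P i = 1.

Definition W (I : finType) (X : Type) (A : eqType) (R : realType)
  (pol : I -> X -> A) (Pi' : {set I}) (P : I -> R) (x : X) (a : A) : R :=
  \sum_(i in Pi' | pol i x == a) P i.

(* Main.v *)
Require Import Defs.
From HB Require Import structures.
From mathcomp Require Import all_boot all_order all_algebra.
From mathcomp Require Import all_classical all_reals all_analysis.
From mathcomp Require Import measurable_realfun ring lra.
Import Order.TTheory GRing.Theory Num.Theory.
Local Open Scope ring_scope.


Lemma aux_div (R : realFieldType) (y0 ye mu e2 : R) : 0 < mu -> mu <= y0 -> mu <= ye ->
  (y0 - ye)^+2 <= e2 -> (y0 - ye) / ye <= (y0 - ye) / y0 + e2 / mu^+2.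
Proof.
move=> m0 my0 mye hd.
have y00 : 0 < y0 by apply: lt_le_trans my0.
have ye0 : 0 < ye by apply: lt_le_trans mye.
have -> : (y0 - ye) / ye = (y0 - ye) / y0 + (y0 - ye)^+2 / (y0 * ye).
  by field; rewrite ?gt_eqF.
rewrite lerD2l.
have e20 : 0 <= e2 by apply: le_trans hd; exact: sqr_ge0.
apply: (@le_trans _ _ (e2 / (y0 * ye))).
  by apply: ler_wpM2r => //; rewrite invr_ge0 mulr_ge0 // ltW.
apply: ler_wpM2l => //.
rewrite lef_pV2 ?posrE ?mulr_gt0 ?exprn_gt0 //.
by rewrite expr2 ler_pM // ltW.
Qed.

Lemma sumc (R : ringType) (A : finType) (x : R) : \sum_(a : A) x = #|A|%:R * x.
Proof. by rewrite sumr_const mulr_natl !cardT. Qed.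

Section Core.
Variables (R : realType) (A I T : finType) (vt : T -> I -> A) (p : T -> R).
Hypotheses (hp0 : forall v, 0 <= p v) (hp1 : \sum_v p v = 1).
Variables (Pi' : {set I}) (i0 : I).
Hypothesis hi0 : i0 \in Pi'.
Variable mu : R.
Hypotheses (mu0 : 0 < mu) (K1 : 1 <= #|A|%:R :> R) (Kmu : 2 * (#|A|%:R * mu) <= 1).

Let K : R := #|A|%:R.
Let c : R := 1 - K * mu.
Definition Wv (P : I -> R) v a := \sum_(i in Pi' | vt v i == a) P i.
Definition yv P v a := c * Wv P v a + mu.
Definition Lp P := \sum_v p v * \sum_a - ln (yv P v a).
Definition Gp P pi := \sum_v p v / yv P v (vt v pi).

Lemma c_ge : 1/2 <= c. Proof. have := Kmu; rewrite /c /K; lra. Qed.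
Lemma c_le : c <= 1 - mu.
Proof. have := mulr_ge0 (eqbRL (subr_ge0 _ _) K1) (ltW mu0); have := Kmu; rewrite /c /K; nra. Qed.
Lemma mu_le : mu <= 1/2.
Proof. have := Kmu; have := K1; have := mu0; nra. Qed.

Lemma W_ge0 P v a : is_distr_on Pi' P -> 0 <= Wv P v a.
Proof. by case=> h0 _; apply: sumr_ge0. Qed.

Lemma W_le1 P v a : is_distr_on Pi' P -> Wv P v a <= 1.
Proof.
case=> h0 [_ h1]; rewrite -h1 [X in _ <= X](bigID (fun i => vt v i == a)) /=.
by rewrite lerDl sumr_ge0.
Qed.

Lemma y_ge P v a : is_distr_on Pi' P -> mu <= yv P v a.
Proof.
move=> hP; rewrite /yv lerDr; apply: mulr_ge0; last exact: W_ge0.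
have := c_ge; lra.
Qed.

Lemma y_le P v a : is_distr_on Pi' P -> yv P v a <= 1.
Proof.
move=> hP; have := W_le1 P v a hP; have := W_ge0 P v a hP; have := c_ge; have := c_le.
rewrite /yv; nra.
Qed.

Lemma L_ge0 P : is_distr_on Pi' P -> 0 <= Lp P.
Proof.
move=> hP; apply: sumr_ge0 => v _; apply: mulr_ge0 => //; apply: sumr_ge0 => a _.
by rewrite oppr_ge0 ln_le0 // y_le.
Qed.


Definition Pe (e : R) P pi (i : I) := (1 - e) * P i + e * (i == pi)%:R.

Lemma Pe_distr e P pi : 0 <= e <= 1 -> pi \in Pi' -> is_distr_on Pi' P ->
  is_distr_on Pi' (Pe e P pi).
Proof.
move=> /andP[e0 e1] hpi [h0 [hout h1]]; split; last split.
- move=> i; rewrite /Pe; apply: addr_ge0; apply: mulr_ge0 => //.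
  by rewrite subr_ge0.
- move=> i hi; rewrite /Pe hout // mulr0 add0r.
  by case: eqP => [ei|]; [rewrite ei hpi in hi | rewrite mulr0].
- rewrite /Pe big_split /= -mulr_sumr h1 mulr1 -mulr_sumr (bigD1 pi) //= eqxx big1.
    by rewrite addr0 mulr1 subrK.
  by move=> i /andP[_ /negPf ->].
Qed.

Lemma W_Pe e P pi v a : pi \in Pi' ->
  Wv (Pe e P pi) v a = (1 - e) * Wv P v a + e * (vt v pi == a)%:R.
Proof.
move=> hpi; rewrite /Wv /Pe big_split /= -!mulr_sumr; congr (_ + e * _).
case: (boolP (vt v pi == a)) => ha.
  rewrite (bigD1 pi) /=; last by rewrite hpi ha.
  rewrite eqxx big1 ?addr0 // => i /andP[_ /negPf ->] //.
rewrite big1 // => i /andP[_ hi]; case: eqP => // ei.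
by rewrite -ei hi in ha.
Qed.

Lemma ln_diff (y0 ye : R) : 0 < y0 -> 0 < ye -> ln y0 - ln ye <= (y0 - ye) / ye.
Proof.
move=> y00 ye0.
have -> : ln y0 - ln ye = ln (1 + (y0 - ye) / ye).
  have -> : 1 + (y0 - ye) / ye = y0 * ye^-1 by field; rewrite gt_eqF.
  by rewrite lnM ?posrE ?invr_gt0 // lnV ?posrE.
apply: le_ln1Dx.
have -> : (y0 - ye) / ye = y0 / ye - 1 by field; rewrite gt_eqF.
have : 0 < y0 / ye by rewrite divr_gt0.
lra.
Qed.


Lemma key_a e P pi v a : 0 <= e <= 1 -> pi \in Pi' -> is_distr_on Pi' P ->
  ln (yv P v a) - ln (yv (Pe e P pi) v a) <=
  e * (c * Wv P v a / yv P v a) - e * c * ((vt v pi == a)%:R / yv P v a) + e^+2 / mu^+2.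
Proof.
move=> he hpi hP.
have hPe := Pe_distr e P pi he hpi hP.
have y0m := y_ge P v a hP; have yem := y_ge (Pe e P pi) v a hPe.
apply: le_trans (ln_diff _ _ (lt_le_trans mu0 y0m) (lt_le_trans mu0 yem)) _.
have hW0 := W_ge0 P v a hP; have hW1 := W_le1 P v a hP.
set W0 := Wv P v a in hW0 hW1 *.
set b : R := (vt v pi == a)%:R.
have b0 : 0 <= b by rewrite /b ler0n.
have b1 : b <= 1 by rewrite /b lern1 leq_b1.
have hd : yv P v a - yv (Pe e P pi) v a = e * c * (W0 - b).
  by rewrite /yv W_Pe // -/W0 -/b; ring.
apply: le_trans (@aux_div _ _ _ _ (e^+2) mu0 y0m yem _) _.
  rewrite hd exprMn; have := c_ge; have := c_le; have := mu0; move: he => /andP[e0 e1].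
  rewrite !expr2 => m0 cl cg.
  have h1 : (W0 - b) * (W0 - b) <= 1 by nra.
  have h2 : c * c <= 1 by nra.
  have h3 : 0 <= e * e by nra.
  have -> : e * c * (e * c) * ((W0 - b) * (W0 - b)) = (e * e) * ((c * c) * ((W0 - b) * (W0 - b))) by ring.
  rewrite -[X in _ <= X]mulr1; apply: ler_wpM2l => //.
  have h4 : 0 <= c * c by rewrite -expr2 sqr_ge0.
  have h5 : 0 <= (W0 - b) * (W0 - b) by rewrite -expr2 sqr_ge0.
  by rewrite -[1]mulr1; apply: ler_pM.
rewrite hd lerD2r le_eqVlt; apply/orP; left; apply/eqP.
have y0p : yv P v a != 0 by rewrite gt_eqF // (lt_le_trans mu0 y0m).
by field.
Qed.


Lemma cW_le P v a : is_distr_on Pi' P -> c * Wv P v a / yv P v a <= 1 - mu.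
Proof.
move=> hP; have y0m := y_ge P v a hP.
have y0p : 0 < yv P v a by apply: lt_le_trans y0m.
rewrite ler_pdivrMr //.
have := W_le1 P v a hP; have := W_ge0 P v a hP; have := c_ge; have := c_le; have := mu0.
rewrite /yv => m0 cl cg w0 w1.
have h : c * Wv P v a <= 1 - mu by nra.
nra.
Qed.

Lemma key_v e P pi v : 0 <= e <= 1 -> pi \in Pi' -> is_distr_on Pi' P ->
  \sum_a (ln (yv P v a) - ln (yv (Pe e P pi) v a)) <=
  e * (K * (1 - mu)) - e * c / yv P v (vt v pi) + K * (e^+2 / mu^+2).
Proof.
move=> he hpi hP.
apply: le_trans (ler_sum _ (fun a _ => key_a e P pi v a he hpi hP)) _.
rewrite !big_split /=.
have e0 : 0 <= e by case/andP: he.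
have hb : \sum_a - (e * c * ((vt v pi == a)%:R / yv P v a)) = - (e * c / yv P v (vt v pi)).
  rewrite (bigD1 (vt v pi)) //= eqxx big1; last first.
    by move=> a /negPf; rewrite eq_sym => ->; rewrite mul0r mulr0 oppr0.
  by rewrite addr0 mul1r.
rewrite sumc lerD2r hb.
rewrite lerD2r -mulr_sumr; apply: ler_wpM2l => //.
apply: le_trans (ler_sum _ (fun a _ => cW_le P v a hP)) _.
by rewrite sumc.
Qed.


Lemma L_decr e P pi : 0 <= e <= 1 -> pi \in Pi' -> is_distr_on Pi' P ->
  Lp (Pe e P pi) - Lp P <= e * (K * (1 - mu)) - e * c * Gp P pi + K * (e^+2 / mu^+2).
Proof.
move=> he hpi hP.
have -> : Lp (Pe e P pi) - Lp P =
    \sum_v p v * \sum_a (ln (yv P v a) - ln (yv (Pe e P pi) v a)).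
  rewrite /Lp -sumrB; apply: eq_bigr => v _; rewrite -mulrBr; congr (_ * _).
  by rewrite -sumrB; apply: eq_bigr => a _; ring.
apply: le_trans (ler_sum _ (fun v _ => ler_wpM2l (hp0 v) (key_v e P pi v he hpi hP))) _.
set B := e * (K * (1 - mu)) + K * (e ^+ 2 / mu ^+ 2).
have -> : \sum_v p v * (e * (K * (1 - mu)) - e * c / yv P v (vt v pi) + K * (e ^+ 2 / mu ^+ 2))
   = \sum_v (B * p v) - e * c * Gp P pi.
  rewrite /Gp mulr_sumr -sumrB; apply: eq_bigr => v _; rewrite /B; ring.
rewrite -mulr_sumr hp1 mulr1 /B; lra.
Qed.

Lemma core_exists : exists P, is_distr_on Pi' P /\ forall pi, pi \in Pi' -> Gp P pi <= 2 * K.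
Proof.
pose E : set R := fun r => exists P, is_distr_on Pi' P /\ r = Lp P.
pose P0 (i : I) : R := (i == i0)%:R.
have hP0 : is_distr_on Pi' P0.
  split; last split.
  - by move=> i; rewrite /P0 ler0n.
  - by move=> i hi; rewrite /P0; case: eqP => // ei; rewrite ei hi0 in hi.
  - rewrite (bigD1 i0) //= /P0 eqxx big1 ?addr0 // => i /andP[_ /negPf -> //].
have hlb : has_lbound E.
  exists 0 => r [P [hP ->]]; exact: L_ge0.
have hinf : has_inf E by split => //; exists (Lp P0), P0.
have K0 : 0 < K by apply: lt_le_trans K1.
pose eta := K * mu^+4 / 8.
have eta0 : 0 < eta by rewrite /eta divr_gt0 // mulr_gt0 // exprn_gt0.
have [r [P [hP ->]] hr] := inf_adherent eta0 hinf.
exists P; split => // pi hpi.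
rewrite leNgt; apply/negP => hG.
pose e := mu^+3 / 4.
have hmu := mu_le.
have e0 : 0 <= e by rewrite /e divr_ge0 // exprn_ge0 // ltW.
have e1 : e <= 1.
  rewrite /e ler_pdivrMr // mul1r; have h3 : mu^+3 <= 1.
    by rewrite exprn_ile1 // ?ltW //; lra.
  lra.
have he : 0 <= e <= 1 by rewrite e0 e1.
have hPe := Pe_distr e P pi he hpi hP.
have hinfle : inf E <= Lp (Pe e P pi) by apply: (ge_inf hlb); exists (Pe e P pi).
have hdec := L_decr e P pi he hpi hP.
have ec0 : 0 < e * c.
  apply: mulr_gt0; last by have := c_ge; lra.
  by rewrite /e divr_gt0 // exprn_gt0.
have hG2 : e * c * (2 * K) < e * c * Gp P pi by rewrite ltr_pM2l.
have h1 : e * K * (2 * (K * mu) - 1) <= 0.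
  apply: mulr_ge0_le0; [by apply: mulr_ge0 => //; exact: ltW | have := Kmu; rewrite /K; lra].
have h2 : e * K * mu = K * mu^+4 / 4 by rewrite /e; field.
have h3 : K * (e ^+ 2 / mu ^+ 2) = K * mu^+4 / 16.
  by rewrite /e; field; rewrite gt_eqF.
have h4 : e * (K * (1 - mu)) - e * c * (2 * K) = e * K * (2 * (K * mu) - 1) - e * K * mu.
  by rewrite /c; ring.
have : K * mu^+4 / 16 < K * mu^+4 / 8.
  by rewrite ltr_pM2l ?mulr_gt0 ?exprn_gt0 //; lra.
rewrite /eta in hr; lra.
Qed.

End Core.

Section IntSec.
Local Open Scope classical_set_scope.
Lemma int_types (R : realType) (d : measure_display) (X : measurableType d)
  (DX : probability X R) (T : finType) (tp : X -> T)
  (mS : forall v, measurable [set x | tp x = v]) (g : T -> R) (g0 : forall v, 0 <= g v) :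
  (\int[DX]_x (g (tp x))%:E = (\sum_v g v * fine (DX [set x | tp x = v]))%:E)%E.
Proof.
have eq : forall x, (g (tp x))%:E = \sum_v (g v * \1_([set x | tp x = v]) x)%:E.
  move=> x; rewrite (bigD1 (tp x)) //= indicE mem_set // mulr1 big1 ?adde0 //.
  by move=> v hv; rewrite indicE memNset ?mulr0 // => /= h; rewrite h eqxx in hv.
under eq_integral do rewrite eq.
rewrite ge0_integral_sum //; last first.
  by move=> v x _; rewrite lee_fin mulr_ge0 // indicE ler0n.
  by move=> v; apply/measurable_EFinP; apply: measurable_funM;
     [exact: measurable_cst | apply/measurable_indicP].
rewrite -sumEFin; apply: eq_bigr => v _.
rewrite (@integralZl_indic _ _ _ _ _ measurableT (fun _ => [set x | tp x = v])) //; last first.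
  by move=> h; have := g0 v; rewrite leNgt h.
rewrite integral_indic // setIT EFinM fineK //.
exact: fin_num_measure.
Qed.

End IntSec.


Theorem corollary1 (R : realType) (d : measure_display) (X : measurableType d)
  (DX : probability X R) (A : finType) (I : finType) (pol : I -> X -> A)
  (pol_inj : injective pol)
  (pol_meas : forall (i : I) (a : A), measurable [set x | pol i x = a])
  (delta : R) (hdelta0 : 0 < delta) (hdelta1 : delta < 1)
  (Pi' : {set I}) (hPi' : Pi' != finset.set0) (t : nat) (ht : (1 <= t)%N) :
  let K := #|A| in
  let N := #|I| in
  let mu := mu_t K N t delta in
  exists P : I -> R, is_distr_on Pi' P /\
    forall pi : I, pi \in Pi' ->
      (\int[DX]_x ((1 / ((1 - K%:R * mu) * W pol Pi' P x (pol pi x) + mu))%:E)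
        <= (2 * K%:R)%:E)%E.
Proof.
move=> K N mu.
case/set0Pn: hPi' => i0 hi0.
have [x0 _] : exists x0 : X, True.
  apply: contrapT => hn.
  have hT : [set: X]%classic = set0.
    by apply/seteqP; split => x // _; apply: hn; exists x.
  have := probability_setT DX; rewrite hT measure0 => h.
  have : (0 < 1 :> \bar R)%E by rewrite lte_fin.
  by rewrite -h ltxx.
have K0 : (0 < K)%N by apply/card_gt0P; exists (pol i0 x0).
have N0 : (0 < N)%N by apply/card_gt0P; exists i0.
have K1 : 1 <= K%:R :> R by rewrite ler1n.
have KR0 : 0 < K%:R :> R by rewrite ltr0n.
have mule : mu <= 1 / (2 * K%:R).
  by rewrite /mu /mu_t ge_min lexx.
have Kmu : 2 * (K%:R * mu) <= 1.
  rewrite mulrA -ler_pdivlMl ?mulr_gt0 //.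
  by rewrite mulr1 -div1r.
have mu0 : 0 < mu.
  rewrite /mu /mu_t lt_min; apply/andP; split.
    by rewrite divr_gt0 // mulr_gt0.
  rewrite sqrtr_gt0 divr_gt0 // ?mulr_gt0 ?ltr0n //.
  apply: ln_gt0; rewrite /delta_t.
  have D0 : 0 < 4 * N%:R * t%:R ^+ 2 :> R by rewrite !mulr_gt0 ?exprn_gt0 ?ltr0n.
  have -> : 1 / (delta / (4 * N%:R * t%:R ^+ 2)) = (4 * N%:R * t%:R ^+ 2) / delta.
    by field; rewrite gt_eqF // !pnatr_eq0 -!lt0n ht N0.
  rewrite ltr_pdivlMr // mul1r.
  have : 1 <= 4 * N%:R * t%:R ^+ 2 :> R.
    have h1 : 1 <= N%:R :> R by rewrite ler1n.
    have h2 : 1 <= t%:R ^+ 2 :> R by rewrite exprn_ege1 // ler1n.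
    have h3 : 1 <= N%:R * t%:R ^+ 2 :> R by apply: (le_trans h1); rewrite ler_peMr // ler0n.
    rewrite -mulrA; lra.
  lra.
pose T := {ffun I -> A}.
pose tp (x : X) : T := [ffun i => pol i x].
have mS : forall v : T, measurable [set x | tp x = v]%classic.
  move=> v.
  have -> : [set x | tp x = v]%classic =
      \big[setI/setT]_(i <- index_enum I) [set x | pol i x = v i]%classic.
    rewrite -bigcap_seq; apply/seteqP; split => x /=.
      by move=> <- i _; rewrite ffunE.
    move=> h; apply/ffunP => i; rewrite ffunE; apply: h.
    by rewrite /= mem_index_enum.
  by apply: bigsetI_measurable => i _; exact: pol_meas.
pose p (v : T) := fine (DX [set x | tp x = v]%classic).
have hp0 : forall v, 0 <= p v by move=> v; apply: fine_ge0; exact: measure_ge0.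
have hp1 : \sum_v p v = 1.
  have h := int_types _ _ _ DX _ _ mS (fun _ => 1) (fun _ => ler01).
  move: h; rewrite /= integral_cst //= probability_setT mule1 => /esym /eqP.
  rewrite eqe => /eqP h; rewrite -h; by apply: eq_bigr => v _; rewrite mul1r.
have [P [hP hG]] := core_exists _ _ _ _ (fun (v : T) i => v i) _ hp0 hp1 _ _ hi0 _ mu0 K1 Kmu.
exists P; split => // pi hpi.
have eqW : forall x, W pol Pi' P x (pol pi x) = Wv _ _ _ _ (fun (v : T) i => v i) Pi' P (tp x) (tp x pi).
  by move=> x; rewrite /W /Wv; apply: eq_bigl => i; rewrite !ffunE.
under eq_integral do rewrite eqW.
have c0 : 0 <= 1 - K%:R * mu by lra.
have g0 : forall v : T, 0 <= 1 / ((1 - K%:R * mu) * Wv _ _ _ _ (fun (v : T) i => v i) Pi' P v (v pi) + mu).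
  move=> v; rewrite divr_ge0 // addr_ge0 ?(ltW mu0) //; apply: mulr_ge0 => //.
  by apply: sumr_ge0 => i _; case: hP.
have h := int_types _ _ _ DX _ _ mS _ g0.
rewrite /= in h; rewrite h lee_fin.
apply: le_trans (hG pi hpi); rewrite /Gp /yv le_eqVlt; apply/orP; left; apply/eqP.
by apply: eq_bigr => v _; rewrite div1r mulrC.
Qed.
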